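(* Let $X$ be a vector space, let $p:X\to\mathbb{R}$ be a sub-additive functional (i.e., $p(x+y)\le p(x)+p(y)$ for all $x,y\in X$), let $S$ be a proper subset of $X$, and let $F:S\to\mathbb{R}$ satisfy $F(s_1)+F(s_2)\le p(s_1+s_2)$ for all $s_1,s_2\in S$ with $s_1\neq s_2$. Then $F$ has an extension $\hat F:X\to\mathbb{R}$ with $\hat F(s)=F(s)$ for all $s\in S$ and $\hat F(x_1)+\hat F(x_2)\le p(x_1+x_2)$ for all $x_1,x_2\in X$ with $x_1\neq x_2$.
   Context: $X$ is a vector space over $K$, where $K$ is $\mathbb{R}$ or $\mathbb{C}$. *)

(* Defs.v *)
From HB Require Import structures.
From mathcomp Require Import all_boot all_order all_algebra.
From mathcomp Require Import boolp classical_sets reals.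
Set Implicit Arguments. Unset Strict Implicit. Unset Printing Implicit Defensive.
Import Order.TTheory GRing.Theory Num.Theory.
Local Open Scope ring_scope.

Definition subadditive (R : realType) (K : fieldType) (X : lmodType K)
  (p : X -> R) : Prop :=
  forall x y : X, p (x + y) <= p x + p y.

(* Main.v *)
Require Import Defs.
From HB Require Import structures.
From mathcomp Require Import all_boot all_order all_algebra.
From mathcomp Require Import boolp classical_sets reals.
From mathcomp Require Import lra.
Import Order.TTheory GRing.Theory Num.Theory.
Local Open Scope classical_set_scope.
Local Open Scope ring_scope.

Lemma G_ok (R : realType) (K : fieldType) (X : lmodType K) (p : X -> R) :
  subadditive p -> forall x1 x2 : X, - p (- x1) + - p (- x2) <= p (x1 + x2).
Proof.
move=> sp x1 x2.
have h0 := sp 0 0; rewrite addr0 in h0.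
have h1 := sp (x1 + x2) (- (x1 + x2)); rewrite subrr in h1.
have h2 := sp (- x1) (- x2); rewrite -opprD in h2.
lra.
Qed.

Theorem theorem4 (R : realType) (K : fieldType) (X : lmodType K)
  (p : X -> R) (S : set X) (F : X -> R) :
  subadditive p ->
  S <> [set: X] ->
  (forall s1 s2 : X, S s1 -> S s2 -> s1 != s2 -> F s1 + F s2 <= p (s1 + s2)) ->
  exists Fh : X -> R,
    (forall s : X, S s -> Fh s = F s) /\
    (forall x1 x2 : X, x1 != x2 -> Fh x1 + Fh x2 <= p (x1 + x2)).
Proof.
move=> sp _ hF.
have [[s0 Ss0]|nS] := pselect (exists s, S s); last first.
  exists (fun x => - p (- x)); split; first by move=> s Ss; case: nS; exists s.
  by move=> x1 x2 _; apply: (@G_ok R K X p sp).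
pose a x := Num.min (F s0 - p (s0 - x)) (Num.min (p (s0 + x) - F s0) (- p (- x))).
have a1 x : a x <= F s0 - p (s0 - x) by rewrite /a ge_min lexx.
have a2 x : a x <= p (s0 + x) - F s0 by rewrite /a !ge_min lexx orbT.
have a3 x : a x <= - p (- x) by rewrite /a !ge_min lexx !orbT.
have mixed s x : S s -> ~ S x -> F s + a x <= p (s + x).
  move=> Ss nSx; have [->|ne] := eqVneq s s0.
    by have := a2 x; lra.
  have h := hF s s0 Ss Ss0 ne.
  have h2 := sp (s + x) (s0 - x).
  have e : s + x + (s0 - x) = s + s0 by rewrite addrACA subrr addr0.
  rewrite e in h2; have := a1 x; lra.
exists (fun x => if x \in S then F x else a x); split.
  by move=> s Ss; rewrite ifT // in_setE.
move=> x1 x2 ne.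
have [S1|S1] := pselect (S x1); [rewrite (mem_set S1)|rewrite (memNset S1)];
  have [S2|S2] := pselect (S x2); rewrite ?(mem_set S2) ?(memNset S2).
- exact: hF.
- exact: mixed.
- by rewrite addrC [x1 + _]addrC; apply: mixed.
- exact: le_trans (lerD (a3 x1) (a3 x2)) (@G_ok R K X p sp x1 x2).
Qed.
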